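(* Let $\mathcal C$ be a category, $n\ge0$, $0\le i\le n$, and let $f:A\to B$ be a zigzag map in $Z(\mathcal C)$ from a zigzag $A$ of length $n$ to a zigzag $B$ of length $n+1$ whose singular map is the face map $d_i:[n]\to[n+1]$ (so its regular slices are $f(r_j):A(r_j)\to B(r_j)$ for $j\le i$ and $f(r_j):A(r_{j-1})\to B(r_j)$ for $j\ge i+1$, and its singular slices are $f(s_j):A(s_j)\to B(s_{d_i(j)})$). Then $f$ is $\pi$-cartesian if and only if all singular slices $f(s_j)$ are isomorphisms in $\mathcal C$, all regular slices $f(r_j)$ with $j\notin\{i,i+1\}$ are isomorphisms in $\mathcal C$, and the commutative square formed by $f(r_i):A(r_i)\to B(r_i)$, $f(r_{i+1}):A(r_i)\to B(r_{i+1})$ and the cospan legs $b_i:B(r_i)\to B(s_i)$, $b'_i:B(r_{i+1})\to B(s_i)$ is a pullback square in $\mathcal C$.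
   Context: Notation: for $n\ge 0$, $[n]$ denotes $\{0,\dots,n-1\}$; $\Delta_+$ is the category of these finite total orders and order-preserving maps. The $i$-th face map $d_i:[n]\to[n+1]$ is the unique injective order-preserving map omitting $i$ from its image. For monotone $\varphi:[n]\to[m]$ define $\hat\varphi:[m+1]\to[n+1]$ by $\hat\varphi(i)=\min(\{j\in[n]:\varphi(j)\ge i\}\cup\{n\})$. Zigzags: in a category $\mathcal C$, a zigzag $X$ of length $n$ is a diagram $X(r_0)\xrightarrow{x_0} X(s_0)\xleftarrow{x'_0} X(r_1)\to\cdots\xrightarrow{x_{n-1}} X(s_{n-1})\xleftarrow{x'_{n-1}} X(r_n)$. A zigzag map $f:X\to Y$ (lengths $n$, $m$) consists of a monotone $f_s:[n]\to[m]$ (singular map), regular slices $f(r_i):X(r_{\hat{f_s}(i)})\to Y(r_i)$ for $0\le i\le m$ and singular slices $f(s_j):X(s_j)\to Y(s_{f_s(j)})$ for $0\le j<n$, such that for each $0\le i<m$: if $f_s^{-1}(i)\neq\emptyset$ with least element $p$, greatest $q$, then $f(s_p)\circ x_p=y_i\circ f(r_i)$, $f(s_q)\circ x'_q=y'_i\circ f(r_{i+1})$, $f(s_j)\circ x'_j=f(s_{j+1})\circ x_{j+1}$ for $p\le j<q$; if $f_s^{-1}(i)=\emptyset$ then $y_i\circ f(r_i)=y'_i\circ f(r_{i+1})$. Composition: $(g\circ f)_s=g_s\circ f_s$, $(g\circ f)(s_j)=g(s_{f_s(j)})\circ f(s_j)$, $(g\circ f)(r_i)=g(r_i)\circ f(r_{\hat{g_s}(i)})$.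 This gives the category $Z(\mathcal C)$. The functor $\pi:Z(\mathcal C)\to\Delta_+$ sends a zigzag of length $n$ to $[n]$ and $f$ to $f_s$. A map $f:x\to y$ is $\pi$-cartesian if for every map $h:x'\to y$ and every $u:\pi(x')\to\pi(x)$ with $\pi(f)\circ u=\pi(h)$ there is a unique $v:x'\to x$ with $f\circ v=h$ and $\pi(v)=u$. *)

(* Defs.v *)
From mathcomp Require Import all_boot.
Set Implicit Arguments.
Unset Strict Implicit.
Unset Printing Implicit Defensive.

(* comp g f denotes g \o f; the axioms are required only for          *)
(* composable pairs (the value of comp on non-composable pairs is      *)
(* irrelevant junk).                                                   *)
Record Category := {
  Ob : Type;
  Mor : Type;
  dom : Mor -> Ob;
  cod : Mor -> Ob;
  idm : Ob -> Mor;
  comp : Mor -> Mor -> Mor;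
  dom_idm : forall a, dom (idm a) = a;
  cod_idm : forall a, cod (idm a) = a;
  dom_comp : forall f g, cod f = dom g -> dom (comp g f) = dom f;
  cod_comp : forall f g, cod f = dom g -> cod (comp g f) = cod g;
  comp_idl : forall f, comp (idm (cod f)) f = f;
  comp_idr : forall f, comp f (idm (dom f)) = f;
  compA : forall f g h, cod f = dom g -> cod g = dom h ->
            comp h (comp g f) = comp (comp h g) f
}.

Arguments dom {c} _.
Arguments cod {c} _.
Arguments idm {c} _.
Arguments comp {c} _ _.

Definition is_iso (C : Category) (f : Mor C) : Prop :=
  exists g : Mor C, dom g = cod f /\ cod g = dom f /\
    comp g f = idm (dom f) /\ comp f g = idm (cod f).

Definition is_pullback (C : Category) (p1 p2 g1 g2 : Mor C) : Prop :=
  [/\ dom p1 = dom p2, cod p1 = dom g1, cod p2 = dom g2 & cod g1 = cod g2] /\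
  comp g1 p1 = comp g2 p2 /\
  forall q1 q2 : Mor C, dom q1 = dom q2 -> cod q1 = dom g1 ->
    cod q2 = dom g2 -> comp g1 q1 = comp g2 q2 ->
    exists u : Mor C,
      [/\ dom u = dom q1, cod u = dom p1, comp p1 u = q1, comp p2 u = q2 &
          forall u' : Mor C, dom u' = dom q1 -> cod u' = dom p1 ->
            comp p1 u' = q1 -> comp p2 u' = q2 -> u' = u].

(* Zigzags of length n:                                                *)
(*   X(r_0) -x_0-> X(s_0) <-x'_0- X(r_1) -> ... <-x'_{n-1}- X(r_n)     *)
Record zigzag (C : Category) (n : nat) := {
  zr : 'I_n.+1 -> Ob C;
  zs : 'I_n -> Ob C;
  zx : 'I_n -> Mor C;
  zx' : 'I_n -> Mor C;
  zx_dom : forall j, dom (zx j) = zr (widen_ord (leqnSn n) j);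
  zx_cod : forall j, cod (zx j) = zs j;
  zx'_dom : forall j, dom (zx' j) = zr (lift ord0 j);
  zx'_cod : forall j, cod (zx' j) = zs j
}.

Definition monotone (n m : nat) (phi : 'I_n -> 'I_m) : Prop :=
  forall a b : 'I_n, a <= b -> phi a <= phi b.

(* hat phi (i) = min ({ j in [n] | phi j >= i } U {n}) *)
Definition hat (n m : nat) (phi : 'I_n -> 'I_m) (i : 'I_m.+1) : 'I_n.+1 :=
  inord (find (fun j : 'I_n => i <= phi j) (enum 'I_n)).

Record zmap (C : Category) (n m : nat) (X : zigzag C n) (Y : zigzag C m) := {
  zm_s : 'I_n -> 'I_m;
  zm_reg : 'I_m.+1 -> Mor C;
  zm_sing : 'I_n -> Mor C;
  zm_mono : monotone zm_s;
  zm_reg_dom : forall i, dom (zm_reg i) = zr X (hat zm_s i);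
  zm_reg_cod : forall i, cod (zm_reg i) = zr Y i;
  zm_sing_dom : forall j, dom (zm_sing j) = zs X j;
  zm_sing_cod : forall j, cod (zm_sing j) = zs Y (zm_s j);
  zm_least : forall (i : 'I_m) (p : 'I_n), zm_s p = i ->
      (forall j, zm_s j = i -> p <= j) ->
      comp (zm_sing p) (zx X p) = comp (zx Y i) (zm_reg (widen_ord (leqnSn m) i));
  zm_greatest : forall (i : 'I_m) (q : 'I_n), zm_s q = i ->
      (forall j, zm_s j = i -> j <= q) ->
      comp (zm_sing q) (zx' X q) = comp (zx' Y i) (zm_reg (lift ord0 i));
  zm_middle : forall (i : 'I_m) (j j1 : 'I_n), val j1 = (val j).+1 ->
      zm_s j = i -> zm_s j1 = i ->
      comp (zm_sing j) (zx' X j) = comp (zm_sing j1) (zx X j1);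
  zm_empty : forall i : 'I_m, (forall j, zm_s j <> i) ->
      comp (zx Y i) (zm_reg (widen_ord (leqnSn m) i)) =
      comp (zx' Y i) (zm_reg (lift ord0 i))
}.

(* "f \o v = h" in Z(C), written out componentwise via the composition
   formulas (g o f)_s = g_s o f_s, (g o f)(s_j) = g(s_{f_s j}) o f(s_j),
   (g o f)(r_i) = g(r_i) o f(r_{hat g_s i}). *)
Definition zcomp_eq (C : Category) (k n m : nat) (X' : zigzag C k)
    (X : zigzag C n) (Y : zigzag C m)
    (f : zmap X Y) (v : zmap X' X) (h : zmap X' Y) : Prop :=
  [/\ forall j, zm_s h j = zm_s f (zm_s v j),
      forall j, zm_sing h j = comp (zm_sing f (zm_s v j)) (zm_sing v j) &
      forall i, zm_reg h i = comp (zm_reg f i) (zm_reg v (hat (zm_s f) i))].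

Definition pi_cartesian (C : Category) (n m : nat) (X : zigzag C n)
    (Y : zigzag C m) (f : zmap X Y) : Prop :=
  forall (k : nat) (X' : zigzag C k) (h : zmap X' Y) (u : 'I_k -> 'I_n),
    monotone u -> (forall j, zm_s f (u j) = zm_s h j) ->
    exists v : zmap X' X,
      [/\ zcomp_eq f v h, zm_s v =1 u &
          forall v' : zmap X' X, zcomp_eq f v' h -> zm_s v' =1 u -> v' = v].

(* Main.v *)
Require Import Defs.
From mathcomp Require Import all_boot.
From mathcomp Require Import zify.
Require Import Defs.
From Stdlib Require Import ProofIrrelevance FunctionalExtensionality IndefiniteDescription.
Set Implicit Arguments.
Unset Strict Implicit.
Unset Printing Implicit Defensive.

Lemma hat_val n m (phi : 'I_n -> 'I_m) l : (hat phi l : nat) = find (fun j : 'I_n => l <= phi j) (enum 'I_n).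
Proof. rewrite /hat inordK // ltnS. by rewrite -[n in _ <= n]size_enum_ord find_size. Qed.

Lemma hat_galois n m (phi : 'I_n -> 'I_m) l (k : 'I_n) : monotone phi ->
  ((hat phi l : nat) <= k) = (l <= phi k).
Proof.
move=> mono; rewrite hat_val.
set P := (fun j : 'I_n => l <= phi j).
apply/idP/idP => H.
- have Hk : find P (enum 'I_n) < n by apply: leq_ltn_trans H _.
  have hs : has P (enum 'I_n) by rewrite has_find size_enum_ord.
  have := nth_find k hs.
  have -> : nth k (enum 'I_n) (find P (enum 'I_n)) = Ordinal Hk.
    apply/val_inj => /=. by rewrite nth_enum_ord.
  rewrite /P => H2. apply: (leq_trans H2). by apply: mono.
- case: (leqP (find P (enum 'I_n)) k) => // Hlt.
  have := before_find k Hlt. by rewrite nth_ord_enum /P H.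
Qed.

Lemma nat_uniq n a b : a <= n -> b <= n -> (forall k, k < n -> (a <= k) = (b <= k)) -> a = b.
Proof.
move=> ha hb H; apply/eqP; rewrite eqn_leq; apply/andP; split.
- case: (leqP a b) => // hba. have e := H b (leq_trans hba ha). by rewrite leqnn leqNgt hba in e.
- case: (leqP b a) => // hab. have e := H a (leq_trans hab hb). by rewrite leqnn leqNgt hab in e.
Qed.

Lemma hat_ord_eq n m (phi : 'I_n -> 'I_m) (l : 'I_m.+1) (c : nat) : monotone phi -> c <= n ->
  (forall k : 'I_n, (c <= k) = (l <= phi k)) -> (hat phi l : nat) = c.
Proof.
move=> mono hc H; apply: (@nat_uniq n) => //; first by rewrite -ltnS ltn_ord.
move=> k hk. have := @hat_galois _ _ phi l (Ordinal hk) mono. rewrite /= => ->. by rewrite (H (Ordinal hk)).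
Qed.

Lemma mono_ext n m (phi psi : 'I_n -> 'I_m) : phi =1 psi -> monotone psi -> monotone phi.
Proof. move=> e mono a b h; rewrite !e; exact: mono. Qed.

Lemma hat_ext n m (phi psi : 'I_n -> 'I_m) : phi =1 psi -> hat phi =1 hat psi.
Proof. move=> e l; rewrite /hat; congr inord; apply: eq_find => j; by rewrite e. Qed.

Lemma mono_id n : monotone (fun j : 'I_n => j).
Proof. by move=> a b. Qed.

Lemma mono_lift n (i : 'I_n.+1) : monotone (lift i).
Proof. move=> a b /= h; rewrite /bump; case: (leqP i a); case: (leqP i b) => /= *; lia. Qed.

Lemma hat_idv n (phi : 'I_n -> 'I_n) l : phi =1 (fun j => j) -> (hat phi l : nat) = l.
Proof.
move=> e; rewrite (hat_ext e l). apply: hat_ord_eq; [exact: mono_id| by rewrite -ltnS ltn_ord |done].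
Qed.

Lemma hat_id n (phi : 'I_n -> 'I_n) l : phi =1 (fun j => j) -> hat phi l = l.
Proof. move=> e; apply/val_inj; exact: hat_idv. Qed.

Lemma hat_liftv n (i : 'I_n.+1) (phi : 'I_n -> 'I_n.+1) (l : 'I_n.+2) : phi =1 lift i ->
  (hat phi l : nat) = if l <= i then (l : nat) else (l : nat).-1.
Proof.
move=> e; rewrite (hat_ext e l). apply: hat_ord_eq; first exact: mono_lift.
- have := ltn_ord l; have := ltn_ord i. case: ifP; lia.
- move=> k /=; rewrite /bump. have := ltn_ord l; have := ltn_ord i; have := ltn_ord k.
  case: (leqP l i); case: (leqP i k); lia.
Qed.

Lemma hat_comp k n m (u : 'I_k -> 'I_n) (d : 'I_n -> 'I_m) (phi : 'I_k -> 'I_m) l :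
  monotone u -> monotone d -> phi =1 (fun j => d (u j)) -> hat phi l = hat u (hat d l).
Proof.
move=> mu md e; apply: ord_inj; rewrite (hat_ext e l).
apply: hat_ord_eq.
- move=> a b h; apply: md; exact: mu.
- by rewrite -ltnS ltn_ord.
- move=> j. by rewrite !hat_galois.
Qed.

Lemma zmap_ext (C : Category) n m (X : zigzag C n) (Y : zigzag C m) (v v' : zmap X Y) :
  zm_s v =1 zm_s v' -> zm_reg v =1 zm_reg v' -> zm_sing v =1 zm_sing v' -> v = v'.
Proof.
case: v => s r g p1 p2 p3 p4 p5 p6 p7 p8 p9; case: v' => s' r' g' q1 q2 q3 q4 q5 q6 q7 q8 q9 /=.
move=> /functional_extensionality es /functional_extensionality er /functional_extensionality eg.
subst s' r' g'. f_equal; apply: proof_irrelevance.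
Qed.

Section Cat.
Variable C : Category.
Implicit Types f g h a b : Mor C.

Lemma iso_monic f a b : is_iso f -> cod a = dom f -> cod b = dom f -> comp f a = comp f b -> a = b.
Proof.
case=> g [dg [cg [gf fg]]] ca cb e.
have -> : a = comp (comp g f) a by rewrite gf -ca comp_idl.
have -> : b = comp (comp g f) b by rewrite gf -cb comp_idl.
by rewrite -!compA ?e // dg.
Qed.

Lemma iso_split f y : is_iso f -> cod y = cod f ->
  exists x, [/\ dom x = dom y, cod x = dom f & comp f x = y].
Proof.
case=> g [dg [cg [gf fg]]] cy; exists (comp g y); split.
- by rewrite dom_comp // dg.
- by rewrite cod_comp // dg.
- by rewrite compA ?dg // fg -cy comp_idl.
Qed.

Lemma iso_intro f g : dom g = cod f -> cod g = dom f -> comp g f = idm (dom f) -> comp f g = idm (cod f) -> is_iso f.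
Proof. by move=> *; exists g. Qed.

End Cat.

Ltac dcb := rewrite ?zx_dom ?zx_cod ?zx'_dom ?zx'_cod ?zm_reg_dom ?zm_reg_cod ?zm_sing_dom ?zm_sing_cod ?dom_idm ?cod_idm.

Ltac dc := dcb; repeat (first [rewrite dom_comp; [|by dc] | rewrite cod_comp; [|by dc]]; dcb); try done.

Lemma fchoice (X Y : Type) (P : X -> Y -> Prop) : (forall a, exists b, P a b) -> exists F, forall a, P a (F a).
Proof.
move=> H; exists (fun a => proj1_sig (constructive_indefinite_description _ (H a))).
move=> a; exact: proj2_sig.
Qed.

Section F.
Variables (C : Category) (n : nat) (i : 'I_n.+1) (A : zigzag C n) (B : zigzag C n.+1) (f : zmap A B).
Hypothesis Hf : zm_s f =1 lift i.

Lemma f_inj j j' : zm_s f j = zm_s f j' -> j = j'.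
Proof. rewrite !Hf; exact: lift_inj. Qed.

Lemma hatf_w j : hat (zm_s f) (widen_ord (leqnSn n.+1) (zm_s f j)) = widen_ord (leqnSn n) j.
Proof.
apply: ord_inj; rewrite (hat_liftv _ Hf) /= Hf /= /bump.
have := ltn_ord i; have := ltn_ord j. case: (leqP i j) => /= h1 h2 h3; case: ifP => /=; lia.
Qed.

Lemma hatf_l j : hat (zm_s f) (lift ord0 (zm_s f j)) = lift ord0 j.
Proof.
apply: ord_inj; rewrite (hat_liftv _ Hf) /= Hf /= /bump.
have := ltn_ord i; have := ltn_ord j. case: (leqP i j) => /= h1 h2 h3; case: ifP => /=; lia.
Qed.

Lemma hatf_wi : hat (zm_s f) (widen_ord (leqnSn n.+1) i) = i.
Proof. apply: ord_inj; rewrite (hat_liftv _ Hf) /=. by rewrite leqnn. Qed.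

Lemma hatf_li : hat (zm_s f) (lift ord0 i) = i.
Proof. apply: ord_inj; rewrite (hat_liftv _ Hf) /= /bump /=. by rewrite add1n ltnn. Qed.

Lemma f_least j : comp (zm_sing f j) (zx A j) = comp (zx B (zm_s f j)) (zm_reg f (widen_ord (leqnSn n.+1) (zm_s f j))).
Proof. apply: zm_least => // j' e; by rewrite (f_inj e). Qed.

Lemma f_greatest j : comp (zm_sing f j) (zx' A j) = comp (zx' B (zm_s f j)) (zm_reg f (lift ord0 (zm_s f j))).
Proof. apply: zm_greatest => // j' e; by rewrite (f_inj e). Qed.

Lemma f_empty : comp (zx B i) (zm_reg f (widen_ord (leqnSn n.+1) i)) = comp (zx' B i) (zm_reg f (lift ord0 i)).
Proof. apply: zm_empty => j; rewrite Hf => e; have := neq_lift i j; by rewrite e eqxx. Qed.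


Lemma emb_ex (l : 'I_n.+1) : l != i -> exists l' : 'I_n.+2,
  [/\ val l' <> val i, val l' <> (val i).+1, hat (zm_s f) l' = l &
      forall l'', hat (zm_s f) l'' = l -> l'' = l'].
Proof.
move=> hl. have hl2 : (l : nat) <> i by move=> e; move: hl; rewrite (ord_inj e) eqxx.
have hb : (if l < i then (l : nat) else l.+1) < n.+2.
  have := ltn_ord l; case: ifP; lia.
exists (Ordinal hb); split.
- rewrite /=; case: ifP; lia.
- rewrite /=; case: ifP; lia.
- apply: ord_inj; rewrite (hat_liftv _ Hf) /=. case: (ltnP l i) => h1 /=; case: ifP => /=; lia.
- move=> l'' /(congr1 (@nat_of_ord _)); rewrite (hat_liftv _ Hf) /= => e; apply: ord_inj => /=.
  move: e; case: (ltnP l i) => h1 /=; case: ifP => /=; lia.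
Qed.

Lemma hat_i (l'' : 'I_n.+2) : hat (zm_s f) l'' = i ->
  l'' = widen_ord (leqnSn n.+1) i \/ l'' = lift ord0 i.
Proof.
move=> /(congr1 (@nat_of_ord _)); rewrite (hat_liftv _ Hf) /= => e.
case: (leqP l'' i) => h; rewrite ?h in e.
- left; apply: ord_inj => /=; lia.
- right; apply: ord_inj => /=; rewrite /bump /=. rewrite leqNgt h /= in e. move: e h; case: (nat_of_ord l'') => //= *; lia.
Qed.

End F.

Ltac dch := repeat match goal with
 | H : forall _, dom _ = _ |- _ => progress rewrite ?H
 | H : forall _, cod _ = _ |- _ => progress rewrite ?H end.
Ltac dcb2 := dcb; dch; dcb.
Ltac dc2 := dcb2; repeat (first [rewrite dom_comp; [|by dc2] | rewrite cod_comp; [|by dc2]]; dcb2); try done.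

Section Back.
Variables (C : Category) (n : nat) (i : 'I_n.+1) (A : zigzag C n) (B : zigzag C n.+1) (f : zmap A B).
Hypothesis Hf : zm_s f =1 lift i.
Hypothesis Hs : forall j : 'I_n, is_iso (zm_sing f j).
Hypothesis Hr : forall j : 'I_n.+2, val j <> val i -> val j <> (val i).+1 -> is_iso (zm_reg f j).
Hypothesis Hpb : is_pullback (zm_reg f (widen_ord (leqnSn n.+1) i)) (zm_reg f (lift ord0 i))
                  (zx B i) (zx' B i).

Ltac dcb3 := dcb; dch; dcb; rewrite ?(hatf_w Hf) ?(hatf_l Hf) ?(hatf_wi Hf) ?(hatf_li Hf).
Ltac dc3 := dcb3; repeat (first [rewrite dom_comp; [|by dc3] | rewrite cod_comp; [|by dc3]]; dcb3); try done.

Theorem back : pi_cartesian f.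
Proof.
move=> k X' h u mu hu.
have hh : zm_s h =1 (fun j => zm_s f (u j)) by move=> j; rewrite hu.
have hath : forall l, hat (zm_s h) l = hat u (hat (zm_s f) l) := fun l => hat_comp l mu (zm_mono f) hh.
have [VS HVS] : exists VS : 'I_k -> Mor C, forall j, [/\ dom (VS j) = zs X' j, cod (VS j) = zs A (u j) &
     comp (zm_sing f (u j)) (VS j) = zm_sing h j].
  apply: (@fchoice _ _ (fun j x => [/\ dom x = zs X' j, cod x = zs A (u j) &
     comp (zm_sing f (u j)) x = zm_sing h j])) => j.
  have [|x [dx cx ex]] := iso_split (y := zm_sing h j) (Hs (u j)); first by dc; rewrite hu.
  by exists x; split => //; [rewrite dx; dc | rewrite cx; dc].
have [VR HVR] : exists VR : 'I_n.+1 -> Mor C, forall l, [/\ dom (VR l) = zr X' (hat u l), cod (VR l) = zr A l &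
     forall l', hat (zm_s f) l' = l -> comp (zm_reg f l') (VR l) = zm_reg h l'].
  apply: (@fchoice _ _ (fun l x => [/\ dom x = zr X' (hat u l), cod x = zr A l &
     forall l', hat (zm_s f) l' = l -> comp (zm_reg f l') x = zm_reg h l'])) => l. case: (eqVneq l i) => [->|hl].
  - case: Hpb => [[d1 c1 c2 c3] [comm univ]].
    have [||||x [dx cx e1 e2 _]] := univ (zm_reg h (widen_ord (leqnSn n.+1) i)) (zm_reg h (lift ord0 i)).
    + by dc; rewrite !hath (hatf_wi Hf) (hatf_li Hf).
    + by dc.
    + by dc.
    + apply: zm_empty => j; rewrite hh Hf => e; have := neq_lift i (u j); by rewrite e eqxx.
    exists x; split.
    + by rewrite dx; dc; rewrite hath (hatf_wi Hf).
    + by rewrite cx; dc; rewrite (hatf_wi Hf).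
    + by move=> l' /(hat_i Hf) [->|->].
  - have [l' [n1 n2 hl' uq]] := emb_ex Hf hl.
    have [|x [dx cx ex]] := iso_split (y := zm_reg h l') (Hr n1 n2); first by dc.
    exists x; split.
    + by rewrite dx; dc; rewrite hath hl'.
    + by rewrite cx; dc; rewrite hl'.
    + by move=> l'' /uq ->.
have VSd : forall j, dom (VS j) = zs X' j by move=> j; case: (HVS j).
have VSc : forall j, cod (VS j) = zs A (u j) by move=> j; case: (HVS j).
have VRd : forall l, dom (VR l) = zr X' (hat u l) by move=> l; case: (HVR l).
have VRc : forall l, cod (VR l) = zr A l by move=> l; case: (HVR l).
have VSe : forall j, comp (zm_sing f (u j)) (VS j) = zm_sing h j by move=> j; case: (HVS j).
have VRe : forall l', comp (zm_reg f l') (VR (hat (zm_s f) l')) = zm_reg h l'.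
  by move=> l'; case: (HVR (hat (zm_s f) l')) => _ _; apply.
have Eleast : forall (i0 : 'I_n) (p : 'I_k), u p = i0 -> (forall j, u j = i0 -> p <= j) ->
    comp (VS p) (zx X' p) = comp (zx A i0) (VR (widen_ord (leqnSn n) i0)).
  move=> i0 p hp hmin; subst i0.
  apply: (iso_monic (Hs (u p))); [by dc3 | by dc3 |].
  rewrite compA; [|by dc3|by dc3]. rewrite VSe.
  rewrite compA; [|by dc3|by dc3]. rewrite (f_least Hf).
  rewrite -compA; [|by dc3|by dc3].
  rewrite -(hatf_w Hf) VRe.
  rewrite hu. apply: zm_least => // j; rewrite !hh => /(f_inj Hf); exact: hmin.
have Egreatest : forall (i0 : 'I_n) (q : 'I_k), u q = i0 -> (forall j, u j = i0 -> j <= q) ->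
    comp (VS q) (zx' X' q) = comp (zx' A i0) (VR (lift ord0 i0)).
  move=> i0 q hq hmax; subst i0.
  apply: (iso_monic (Hs (u q))); [by dc3 | by dc3 |].
  rewrite compA; [|by dc3|by dc3]. rewrite VSe.
  rewrite compA; [|by dc3|by dc3]. rewrite (f_greatest Hf).
  rewrite -compA; [|by dc3|by dc3].
  rewrite -(hatf_l Hf) VRe.
  rewrite hu. apply: zm_greatest => // j; rewrite !hh => /(f_inj Hf); exact: hmax.
have Emiddle : forall (i0 : 'I_n) (j j1 : 'I_k), val j1 = (val j).+1 -> u j = i0 -> u j1 = i0 ->
    comp (VS j) (zx' X' j) = comp (VS j1) (zx X' j1).
  move=> i0 j j1 hj e1 e2; subst i0.
  have E2 : comp (zm_sing f (u j)) (VS j1) = zm_sing h j1 by rewrite -e2 VSe.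
  have C2 : cod (VS j1) = zs A (u j) by rewrite -e2 VSc.
  apply: (iso_monic (Hs (u j))); [by dc3 | by dc3; rewrite e2 |].
  rewrite compA; [|by dc3|by dc3]. rewrite VSe.
  rewrite compA; [|by dc3|by rewrite C2; dc3]. rewrite E2.
  apply: (zm_middle (i := zm_s h j)) => //. by rewrite !hh e2.
have Eempty : forall i0 : 'I_n, (forall j, u j <> i0) ->
    comp (zx A i0) (VR (widen_ord (leqnSn n) i0)) = comp (zx' A i0) (VR (lift ord0 i0)).
  move=> i0 hne.
  apply: (iso_monic (Hs i0)); [by dc3 | by dc3 |].
  rewrite compA; [|by dc3|by dc3]. rewrite (f_least Hf).
  rewrite -compA; [|by dc3|by dc3].
  rewrite -(hatf_w Hf) VRe.
  rewrite compA; [|by dc3|by dc3]. rewrite (f_greatest Hf).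
  rewrite -compA; [|by dc3|by dc3].
  rewrite -(hatf_l Hf) VRe.
  apply: zm_empty => j; rewrite hh => /(f_inj Hf); exact: hne.
exists (@Build_zmap C k n X' A u VR VS mu VRd VRc VSd VSc Eleast Egreatest Emiddle Eempty).
split => //.
- split => //= l; by rewrite VRe.
- move=> v' [e1 e2 e3] es. apply: zmap_ext => //=.
  + move=> l. case: (eqVneq l i) => [->|hl].
    * case: Hpb => [_ [_ univ]].
      have [||||x [dx cx ex1 ex2 uq]] := univ (zm_reg h (widen_ord (leqnSn n.+1) i)) (zm_reg h (lift ord0 i)).
      - by dc3; rewrite !hath (hatf_wi Hf) (hatf_li Hf).
      - by dc3.
      - by dc3.
      - apply: zm_empty => j; rewrite hh Hf => e; have := neq_lift i (u j); by rewrite e eqxx.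
      have h1 := e3 (widen_ord (leqnSn n.+1) i); rewrite (hatf_wi Hf) in h1.
      have h2 := e3 (lift ord0 i); rewrite (hatf_li Hf) in h2.
      have h3 := VRe (widen_ord (leqnSn n.+1) i); rewrite (hatf_wi Hf) in h3.
      have h4 := VRe (lift ord0 i); rewrite (hatf_li Hf) in h4.
      have ea : zm_reg v' i = x.
        apply: uq; [ by dc3; rewrite hath (hatf_wi Hf) (hat_ext es) | by dc3 | by rewrite h1 | by rewrite h2 ].
      have eb : VR i = x.
        apply: uq; [ by dc3; rewrite hath (hatf_wi Hf) | by dc3 | by rewrite h3 | by rewrite h4 ].
      by rewrite ea eb.
    * have [l' [n1 n2 hl' uq]] := emb_ex Hf hl.
      apply: (iso_monic (Hr n1 n2)); [by dc3; rewrite hl' | by dc3; rewrite hl' |].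
      have := e3 l'; rewrite hl' => <-. have := VRe l'; by rewrite hl'.
  + move=> j. apply: (iso_monic (Hs (u j))); [by dc3; rewrite es | by dc3 |].
    have := e2 j; rewrite es => <-. by rewrite VSe.
Qed.
End Back.

Lemma comp_idl' (C : Category) (a : Ob C) (g : Mor C) : cod g = a -> comp (idm a) g = g.
Proof. move=> <-; exact: comp_idl. Qed.
Lemma comp_idr' (C : Category) (a : Ob C) (g : Mor C) : dom g = a -> comp g (idm a) = g.
Proof. move=> <-; exact: comp_idr. Qed.

Lemma valE m (j : 'I_m) : val j = nat_of_ord j. Proof. by []. Qed.

Ltac blia := rewrite ?valE /=; unfold bump in *; rewrite /=;
  repeat (match goal with H : context [nat_of_bool _] |- _ => revert H end);
  repeat (match goal with H : context [if _ then _ else _] |- _ => revert H end);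
  repeat (match goal with
    | |- context [nat_of_bool (?a <= ?b)] => let H := fresh "H" in case: (leqP a b) => H
    | |- context [if ?c then _ else _] => let H := fresh "H" in case: (boolP c) => H
    end);
  rewrite /=; lia.

Section ZId.
Variables (C : Category) (n : nat) (X : zigzag C n).
Definition zid : zmap X X.
refine (@Build_zmap C n n X X (fun j => j) (fun l => idm (zr X l)) (fun j => idm (zs X j)) (@mono_id n) _ _ _ _ _ _ _ _).
- by move=> l; rewrite dom_idm hat_id.
- by move=> l; rewrite cod_idm.
- by move=> j; rewrite dom_idm.
- by move=> j; rewrite cod_idm.
- move=> i0 p -> _. by rewrite comp_idl' ?zx_cod // comp_idr' ?zx_dom.
- move=> i0 p -> _. by rewrite comp_idl' ?zx'_cod // comp_idr' ?zx'_dom.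
- move=> i0 j j1 e e1 e2. have ee : j1 = j by rewrite e2 -e1. exfalso. move: e; rewrite ee !valE; lia.
- move=> i0 H. by case: (H i0).
Defined.
End ZId.

Section Fwd.
Variables (C : Category) (n : nat) (i : 'I_n.+1) (A : zigzag C n) (B : zigzag C n.+1) (f : zmap A B).
Hypothesis Hf : zm_s f =1 lift i.

Ltac dcb5 := dcb; dch; dcb; rewrite ?(hatf_w Hf) ?(hatf_l Hf) ?(hatf_wi Hf) ?(hatf_li Hf).
Ltac dc5 := dcb5; repeat (first [rewrite dom_comp; [|by dc5] | rewrite cod_comp; [|by dc5]]; dcb5); try done.

Lemma zrB (a b : 'I_n.+2) : (a : nat) = b -> zr B a = zr B b.
Proof. by move=> /ord_inj ->. Qed.
Lemma zsB (a b : 'I_n.+1) : (a : nat) = b -> zs B a = zs B b.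
Proof. by move=> /ord_inj ->. Qed.

Definition X0r (P : Ob C) (l : 'I_n.+1) : Ob C :=
  if (l : nat) == i then P else if l < i then zr B (widen_ord (leqnSn n.+1) l) else zr B (lift ord0 l).
Definition X0x (q2 : Mor C) (j : 'I_n) : Mor C :=
  if (j : nat) == i then comp (zx B (lift i j)) q2 else zx B (lift i j).
Definition X0x' (q1 : Mor C) (j : 'I_n) : Mor C :=
  if (j : nat).+1 == i then comp (zx' B (lift i j)) q1 else zx' B (lift i j).

Variables (P : Ob C) (q1 q2 : Mor C).
Hypotheses (dq1 : dom q1 = P) (dq2 : dom q2 = P)
  (cq1 : cod q1 = zr B (widen_ord (leqnSn n.+1) i)) (cq2 : cod q2 = zr B (lift ord0 i)).

Definition X0 : zigzag C n.
refine (@Build_zigzag C n (X0r P) (fun j => zs B (lift i j)) (X0x q2) (X0x' q1) _ _ _ _).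
- move=> j; rewrite /X0x /X0r /=. case: eqP => hj.
  + rewrite dom_comp // zx_dom cq2; apply: zrB => /=; blia.
  + rewrite zx_dom; case: ifP => h; apply: zrB => /=; blia.
- move=> j; rewrite /X0x; case: eqP => hj; last by rewrite zx_cod.
  rewrite cod_comp ?zx_cod // zx_dom cq2; apply: zrB => /=; blia.
- move=> j; rewrite /X0x' /X0r /=. case: eqP => hj.
  + rewrite dom_comp // zx'_dom cq1; apply: zrB => /=; blia.
  + rewrite zx'_dom; case: ifP => h; apply: zrB => /=; blia.
- move=> j; rewrite /X0x'; case: eqP => hj; last by rewrite zx'_cod.
  rewrite cod_comp ?zx'_cod // zx'_dom cq1; apply: zrB => /=; blia.
Defined.


Definition h0r (l' : 'I_n.+2) : Mor C :=
  if (l' : nat) == i then q1 else if (l' : nat) == i.+1 then q2 else idm (zr B l').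

Hypothesis comm : comp (zx B i) q1 = comp (zx' B i) q2.

Definition h0 : zmap X0 B.
refine (@Build_zmap C n n.+1 X0 B (lift i) h0r (fun j => idm (zs B (lift i j))) (@mono_lift n i) _ _ _ _ _ _ _ _).
- move=> l'; have hc := @hat_liftv n i (lift i) l' (frefl _).
  rewrite /= /h0r /X0r.
  case: eqP => e1; first by rewrite ifT ?dq1 //; apply/eqP; blia.
  case: eqP => e2; first by rewrite ifT ?dq2 //; apply/eqP; blia.
  rewrite dom_idm ifF; last by apply/eqP; blia.
  case: ifP => e3; apply: zrB => /=; blia.
- move=> l'; rewrite /h0r. case: eqP => e1; first by rewrite cq1; apply: zrB.
  case: eqP => e2; first by rewrite cq2; apply: zrB => /=; blia.
  by rewrite cod_idm.
- by move=> j; rewrite dom_idm.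
- by move=> j; rewrite cod_idm.
- move=> i1 p <- _. rewrite comp_idl'; last by rewrite zx_cod.
  rewrite /= /X0x /h0r. case: eqP => e1.
  + rewrite ifF; last by apply/eqP; blia.
    rewrite ifT; last by apply/eqP; blia.
    done.
  + rewrite ifF; last by apply/eqP; blia.
    rewrite ifF; last by apply/eqP; blia.
    by rewrite comp_idr' // zx_dom.
- move=> i1 p <- _. rewrite comp_idl'; last by rewrite zx'_cod.
  rewrite /= /X0x' /h0r. case: eqP => e1.
  + rewrite ifT; last by apply/eqP; blia.
    done.
  + rewrite ifF; last by apply/eqP; blia.
    rewrite ifF; last by apply/eqP; blia.
    by rewrite comp_idr' // zx'_dom.
- move=> i1 j j1 e e1 e2. exfalso. have := lift_inj (etrans e1 (esym e2)) => ee.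
  move: e; rewrite ee !valE; lia.
- move=> i1 H. case: (unliftP i i1) => [j ej|ej]; first by case: (H j).
  subst i1. rewrite /h0r /= eqxx ifF; last by apply/eqP; blia.
  by rewrite eqxx.
Defined.

End Fwd.

Lemma zrE (C : Category) m (X : zigzag C m) (a b : 'I_m.+1) : (a : nat) = b -> zr X a = zr X b.
Proof. by move=> /ord_inj ->. Qed.
Lemma zsE (C : Category) m (X : zigzag C m) (a b : 'I_m) : (a : nat) = b -> zs X a = zs X b.
Proof. by move=> /ord_inj ->. Qed.

Section Fwd2.
Variables (C : Category) (n : nat) (i : 'I_n.+1) (A : zigzag C n) (B : zigzag C n.+1) (f : zmap A B).
Hypothesis Hf : zm_s f =1 lift i.
Hypothesis Hc : pi_cartesian f.

Ltac dchat := repeat match goal with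
 | H : forall _, hat _ _ = _ |- _ => progress rewrite ?H end.
Ltac dcb6 := dcb; dch; dcb; dchat; rewrite ?(hatf_w Hf) ?(hatf_l Hf) ?(hatf_wi Hf) ?(hatf_li Hf) ?Hf /=.
Ltac dc6 := dcb6; repeat (first [rewrite dom_comp; [|by dc6] | rewrite cod_comp; [|by dc6]]; dcb6); try done.

Section Lift.
Variables (P : Ob C) (q1 q2 : Mor C).
Hypotheses (dq1 : dom q1 = P) (dq2 : dom q2 = P)
  (cq1 : cod q1 = zr B (widen_ord (leqnSn n.+1) i)) (cq2 : cod q2 = zr B (lift ord0 i))
  (comm : comp (zx B i) q1 = comp (zx' B i) q2).

Lemma lift_ex : exists v : zmap (X0 dq1 dq2 cq1 cq2) A,
  [/\ zm_s v =1 (fun j => j),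
      forall j, comp (zm_sing f j) (zm_sing v j) = idm (zs B (lift i j)),
      forall l', comp (zm_reg f l') (zm_reg v (hat (zm_s f) l')) = h0r i B q1 q2 l' &
      forall v', zcomp_eq f v' (h0 dq1 dq2 cq1 cq2 comm) -> zm_s v' =1 (fun j => j) -> v' = v].
Proof.
have [v [[e1 e2 e3] es uq]] := @Hc n _ (h0 dq1 dq2 cq1 cq2 comm) (fun j => j) (@mono_id n) (fun j => Hf j).
exists v; split => //.
- move=> j; have := e2 j; rewrite es /= => ->. done.
- move=> l'; have := e3 l'; rewrite /= => ->. done.
Qed.
End Lift.


Lemma hatf_wl (l : 'I_n.+1) : l <= i -> hat (zm_s f) (widen_ord (leqnSn n.+1) l) = l.
Proof. move=> h; apply: ord_inj; rewrite (hat_liftv _ Hf) /= ifT //. Qed.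

Lemma hatf_ll (l : 'I_n.+1) : i <= l -> hat (zm_s f) (lift ord0 l) = l.
Proof. move=> h; apply: ord_inj; rewrite (hat_liftv _ Hf) /= /bump /= ifF //. apply/negbTE; rewrite -ltnNge; lia. Qed.

Lemma dq1i : dom (zm_reg f (widen_ord (leqnSn n.+1) i)) = zr A i.
Proof. by rewrite zm_reg_dom (hatf_wi Hf). Qed.
Lemma dq2i : dom (zm_reg f (lift ord0 i)) = zr A i.
Proof. by rewrite zm_reg_dom (hatf_li Hf). Qed.
Lemma cq1i : cod (zm_reg f (widen_ord (leqnSn n.+1) i)) = zr B (widen_ord (leqnSn n.+1) i).
Proof. by rewrite zm_reg_cod. Qed.
Lemma cq2i : cod (zm_reg f (lift ord0 i)) = zr B (lift ord0 i).
Proof. by rewrite zm_reg_cod. Qed.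

Definition X1 := X0 dq1i dq2i cq1i cq2i.

Definition f'r (l : 'I_n.+1) : Mor C :=
  if (l : nat) == i then idm (zr A l) else
  if l < i then zm_reg f (widen_ord (leqnSn n.+1) l) else zm_reg f (lift ord0 l).

Definition f' : zmap A X1.
refine (@Build_zmap C n n A X1 (fun j => j) f'r (zm_sing f) (@mono_id n) _ _ _ _ _ _ _ _).
- move=> l; rewrite hat_id // /f'r. case: eqP => e1; first by rewrite dom_idm.
  case: ifP => e2; rewrite zm_reg_dom; [rewrite hatf_wl // | rewrite hatf_ll //]; blia.
- move=> l; rewrite /= /f'r /X0r. case: eqP => e1; first by rewrite cod_idm (ord_inj e1).
  by case: ifP => e2; rewrite zm_reg_cod.
- by move=> j; rewrite zm_sing_dom.
- by move=> j; rewrite zm_sing_cod Hf.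
- move=> i1 p <- _. rewrite (f_least Hf) /= /X0x /f'r /= Hf. case: eqP => e1.
  + rewrite comp_idr'; last first.
      rewrite dom_comp; last by rewrite zm_reg_cod zx_dom; apply: zrE; blia.
      by rewrite zm_reg_dom (hatf_li Hf); apply: zrE; blia.
    congr (comp _ (zm_reg f _)). apply: ord_inj; blia.
  + case: ifP => e2; congr (comp _ (zm_reg f _)); apply: ord_inj; blia.
- move=> i1 p <- _. rewrite (f_greatest Hf) /= /X0x' /f'r /= Hf. case: eqP => e1.
  + rewrite comp_idr'; last first.
      rewrite dom_comp; last by rewrite zm_reg_cod zx'_dom; apply: zrE; blia.
      by rewrite zm_reg_dom (hatf_wi Hf); apply: zrE; blia.
    congr (comp _ (zm_reg f _)). apply: ord_inj; blia.
  + case: ifP => e2; congr (comp _ (zm_reg f _)); apply: ord_inj; blia.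
- move=> i1 j j1 e e1 e2. have ee : j1 = j by rewrite e2 -e1. exfalso. move: e; rewrite ee !valE; lia.
- move=> i1 H. by case: (H i1).
Defined.


Lemma f'r_hat (l' : 'I_n.+2) : (l' : nat) <> i -> (l' : nat) <> i.+1 ->
  f'r (hat (zm_s f) l') = zm_reg f l'.
Proof.
move=> h1 h2; have hc := hat_liftv l' Hf.
rewrite /f'r ifF; last by apply/eqP; blia.
case: ifP => e; congr (zm_reg f _); apply: ord_inj; blia.
Qed.

Lemma key (l' : 'I_n.+2) :
  comp (h0r i B (zm_reg f (widen_ord (leqnSn n.+1) i)) (zm_reg f (lift ord0 i)) l')
       (f'r (hat (zm_s f) l')) = zm_reg f l'.
Proof.
have hc := hat_liftv l' Hf.
rewrite /h0r. case: eqP => e1.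
  rewrite /f'r ifT; last by apply/eqP; blia.
  rewrite comp_idr'; last by rewrite zm_reg_dom (hatf_wi Hf); apply: zrE; blia.
  congr (zm_reg f _); apply: ord_inj; blia.
case: eqP => e2.
  rewrite /f'r ifT; last by apply/eqP; blia.
  rewrite comp_idr'; last by rewrite zm_reg_dom (hatf_li Hf); apply: zrE; blia.
  congr (zm_reg f _); apply: ord_inj; blia.
rewrite f'r_hat //. by rewrite comp_idl' // zm_reg_cod.
Qed.

Lemma isos : (forall j : 'I_n, is_iso (zm_sing f j)) /\ (forall j : 'I_n.+2, val j <> val i -> val j <> (val i).+1 -> is_iso (zm_reg f j)).
Proof.
have [v [es Es Er uq]] := lift_ex dq1i dq2i cq1i cq2i (f_empty Hf).
have vrd : forall l, dom (zm_reg v l) = X0r i B (zr A i) l.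
  by move=> l; rewrite zm_reg_dom hat_id.
have wd : forall l, dom (comp (zm_reg v l) (zm_reg f' l)) = zr A (hat (fun j => j) l).
  move=> l; rewrite dom_comp; first by rewrite zm_reg_dom.
  by rewrite zm_reg_cod vrd.
have wc : forall l, cod (comp (zm_reg v l) (zm_reg f' l)) = zr A l.
  move=> l; rewrite cod_comp ?zm_reg_cod ?vrd //.
have wsd : forall j, dom (comp (zm_sing v j) (zm_sing f' j)) = zs A j.
  move=> j; rewrite dom_comp ?zm_sing_dom ?zm_sing_cod ?zm_sing_dom //.
have wsc : forall j, cod (comp (zm_sing v j) (zm_sing f' j)) = zs A ((fun j => j) j).
  move=> j; rewrite cod_comp ?zm_sing_cod ?zm_sing_dom ?es //.
have hv : forall l, hat (zm_s v) l = l by move=> l; rewrite hat_id.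
have hid : forall l, hat (fun j : 'I_n => j) l = l by move=> l; rewrite hat_id.
have Wl : forall (i1 : 'I_n) (p : 'I_n), (fun j => j) p = i1 -> (forall j, (fun j => j) j = i1 -> p <= j) ->
   comp (comp (zm_sing v p) (zm_sing f' p)) (zx A p) =
   comp (zx A i1) (comp (zm_reg v (widen_ord (leqnSn n) i1)) (zm_reg f' (widen_ord (leqnSn n) i1))).
  move=> i1 p /= <- _.
  rewrite -compA; [|by dc6|by dc6].
  rewrite (@zm_least _ _ _ _ _ f' p p erefl); last by move=> j /= ->.
  rewrite compA; [|by dc6|by dc6].
  rewrite (@zm_least _ _ _ _ _ v p p (es p)); last by move=> j; rewrite es => ->.
  by rewrite -compA; [|by dc6|by dc6].
have Wg : forall (i1 : 'I_n) (q : 'I_n), (fun j => j) q = i1 -> (forall j, (fun j => j) j = i1 -> j <= q) ->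
   comp (comp (zm_sing v q) (zm_sing f' q)) (zx' A q) =
   comp (zx' A i1) (comp (zm_reg v (lift ord0 i1)) (zm_reg f' (lift ord0 i1))).
  move=> i1 q /= <- _.
  rewrite -compA; [|by dc6|by dc6].
  rewrite (@zm_greatest _ _ _ _ _ f' q q erefl); last by move=> j /= ->.
  rewrite compA; [|by dc6|by dc6].
  rewrite (@zm_greatest _ _ _ _ _ v q q (es q)); last by move=> j; rewrite es => ->.
  by rewrite -compA; [|by dc6|by dc6].
have Wm : forall (i1 : 'I_n) (j j1 : 'I_n), val j1 = (val j).+1 -> (fun j => j) j = i1 -> (fun j => j) j1 = i1 ->
   comp (comp (zm_sing v j) (zm_sing f' j)) (zx' A j) = comp (comp (zm_sing v j1) (zm_sing f' j1)) (zx A j1).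
  move=> i1 j j1 e e1 e2. have ee : j1 = j by rewrite e2 -e1. exfalso. move: e; rewrite ee !valE; lia.
have We : forall i1 : 'I_n, (forall j, (fun j => j) j <> i1) ->
   comp (zx A i1) (comp (zm_reg v (widen_ord (leqnSn n) i1)) (zm_reg f' (widen_ord (leqnSn n) i1))) =
   comp (zx' A i1) (comp (zm_reg v (lift ord0 i1)) (zm_reg f' (lift ord0 i1))).
  move=> i1 H. by case: (H i1).
pose w := @Build_zmap C n n A A (fun j => j) (fun l => comp (zm_reg v l) (zm_reg f' l))
   (fun j => comp (zm_sing v j) (zm_sing f' j)) (@mono_id n) wd wc wsd wsc Wl Wg Wm We.
have [v0 [_ _ uq0]] := @Hc n A f (fun j => j) (@mono_id n) (fun j => erefl).
have e0 : zid A = v0.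
  apply: uq0 => //. split => //= j; first by rewrite comp_idr' // zm_sing_dom.
  by rewrite comp_idr' // zm_reg_dom.
have e1 : w = v0.
  apply: uq0 => //. split => //= j.
    rewrite compA; [|by dc6; rewrite es|by dc6; rewrite es]. rewrite Es comp_idl' //. by rewrite zm_sing_cod Hf.
  - have f'rc : forall l, cod (f'r l) = X0r i B (zr A i) l by move=> l; exact: (zm_reg_cod f' l).
    rewrite compA; [|by dc6|by dc6]. by rewrite Er key.
have ew : w = zid A by rewrite e1 e0.
have Ws : forall j, comp (zm_sing v j) (zm_sing f j) = idm (zs A j).
  by move=> j; have := congr1 (fun z => zm_sing z j) ew.
have Wr : forall l, comp (zm_reg v l) (f'r l) = idm (zr A l).
  by move=> l; have := congr1 (fun z => zm_reg z l) ew.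
split.
- move=> j. apply: (@iso_intro _ _ (zm_sing v j)).
  + by rewrite zm_sing_dom zm_sing_cod Hf.
  + by rewrite zm_sing_cod zm_sing_dom es.
  + by rewrite Ws zm_sing_dom.
  + by rewrite Es zm_sing_cod Hf.
- move=> l' h1 h2.
  have hf : comp (zm_reg f l') (zm_reg v (hat (zm_s f) l')) = idm (zr B l').
    rewrite Er /h0r ifF; last by apply/eqP.
    rewrite ifF //; by apply/eqP.
  have hg : comp (zm_reg v (hat (zm_s f) l')) (zm_reg f l') = idm (zr A (hat (zm_s f) l')).
    by have := Wr (hat (zm_s f) l'); rewrite f'r_hat.
  have cg : cod (zm_reg v (hat (zm_s f) l')) = dom (zm_reg f l') by rewrite zm_reg_cod zm_reg_dom.
  apply: (@iso_intro _ _ (zm_reg v (hat (zm_s f) l'))).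
  + by rewrite -(dom_comp cg) hf dom_idm zm_reg_cod.
  + by rewrite zm_reg_cod zm_reg_dom.
  + by rewrite hg zm_reg_dom.
  + by rewrite hf zm_reg_cod.
Qed.

Lemma pb : is_pullback (zm_reg f (widen_ord (leqnSn n.+1) i)) (zm_reg f (lift ord0 i))
                  (zx B i) (zx' B i).
Proof.
have [Hs _] := isos.
split; first split.
- by rewrite dq1i dq2i.
- by rewrite zm_reg_cod zx_dom.
- by rewrite zm_reg_cod zx'_dom.
- by rewrite zx_cod zx'_cod.
split; first exact: (f_empty Hf).
move=> q1 q2 dq cq1 cq2 cm.
have cq1' : cod q1 = zr B (widen_ord (leqnSn n.+1) i) by rewrite cq1 zx_dom.
have cq2' : cod q2 = zr B (lift ord0 i) by rewrite cq2 zx'_dom.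
have [v [es Es Er uq]] := lift_ex (erefl (dom q1)) (esym dq) cq1' cq2' cm.
have hv : forall l, hat (zm_s v) l = l by move=> l; rewrite hat_id.
have Er1 : comp (zm_reg f (widen_ord (leqnSn n.+1) i)) (zm_reg v i) = q1.
  have := Er (widen_ord (leqnSn n.+1) i); rewrite (hatf_wi Hf) => ->.
  by rewrite /h0r /= eqxx.
have Er2 : comp (zm_reg f (lift ord0 i)) (zm_reg v i) = q2.
  have := Er (lift ord0 i); rewrite (hatf_li Hf) => ->.
  rewrite /h0r /= ifF; last by apply/eqP; blia.
  by rewrite ifT //; apply/eqP; blia.
exists (zm_reg v i); split => //.
- by rewrite zm_reg_dom hv /= /X0r eqxx.
- by rewrite zm_reg_cod dq1i.
move=> u' du' cu' e1 e2.
have cu : cod u' = zr A i by rewrite cu' dq1i.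
have Mx : forall i1 : 'I_n, (i1 : nat) = i -> comp (zx A i1) u' = comp (zx A i1) (zm_reg v i).
  move=> i1 hi.
  have ew : widen_ord (leqnSn n.+1) (zm_s f i1) = lift ord0 i by apply: ord_inj; rewrite Hf; blia.
  have ew2 : zr A (widen_ord (leqnSn n) i1) = zr A i by apply: zrE.
  apply: (iso_monic (Hs i1)); [by rewrite cod_comp; [rewrite zx_cod zm_sing_dom | rewrite zx_dom ew2 cu] | by dc6 |].
  rewrite !compA; [|by dc6; rewrite ?ew2 ?cu|by dc6; rewrite ?ew2 ?cu|by dc6; rewrite ?ew2 ?cu|by dc6; rewrite ?ew2 ?cu].
  rewrite (f_least Hf) ew.
  rewrite -!compA; [|by dc6|by rewrite zm_reg_cod zx_dom ew|by dc6; rewrite cu|by rewrite zm_reg_cod zx_dom ew].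
  by rewrite e2 Er2.
have Mx' : forall i1 : 'I_n, (i1 : nat).+1 = i -> comp (zx' A i1) u' = comp (zx' A i1) (zm_reg v i).
  move=> i1 hi.
  have ew : lift ord0 (zm_s f i1) = widen_ord (leqnSn n.+1) i by apply: ord_inj; rewrite Hf; blia.
  have ew2 : zr A (lift ord0 i1) = zr A i by apply: zrE; blia.
  apply: (iso_monic (Hs i1)); [by rewrite cod_comp; [rewrite zx'_cod zm_sing_dom | rewrite zx'_dom ew2 cu] | by dc6 |].
  rewrite !compA; [|by dc6; rewrite ?ew2 ?cu|by dc6; rewrite ?ew2 ?cu|by dc6; rewrite ?ew2 ?cu|by dc6; rewrite ?ew2 ?cu].
  rewrite (f_greatest Hf) ew.
  rewrite -!compA; [|by dc6|by rewrite zm_reg_cod zx'_dom ew|by dc6; rewrite cu|by rewrite zm_reg_cod zx'_dom ew].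
  by rewrite e1 Er1.
pose VR := fun l : 'I_n.+1 => if (l : nat) == i then u' else zm_reg v l.
have Vd : forall l, dom (VR l) = zr (X0 (erefl (dom q1)) (esym dq) cq1' cq2') (hat (zm_s v) l).
  move=> l; rewrite /VR; case: eqP => e; last by rewrite zm_reg_dom.
  rewrite hv /= /X0r ifT ?du' //; by apply/eqP.
have Vc : forall l, cod (VR l) = zr A l.
  move=> l; rewrite /VR; case: eqP => e; last by rewrite zm_reg_cod.
  rewrite cu; by apply: zrE.
have Vl : forall (i1 : 'I_n) (p : 'I_n), zm_s v p = i1 -> (forall j, zm_s v j = i1 -> p <= j) ->
    comp (zm_sing v p) (zx (X0 (erefl (dom q1)) (esym dq) cq1' cq2') p) = comp (zx A i1) (VR (widen_ord (leqnSn n) i1)).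
  move=> i1 p h1 h2; rewrite (@zm_least _ _ _ _ _ v i1 p h1 h2) /VR. case: eqP => e //.
  rewrite Mx //. congr (comp _ (zm_reg v _)); exact: ord_inj.
have Vg : forall (i1 : 'I_n) (q : 'I_n), zm_s v q = i1 -> (forall j, zm_s v j = i1 -> j <= q) ->
    comp (zm_sing v q) (zx' (X0 (erefl (dom q1)) (esym dq) cq1' cq2') q) = comp (zx' A i1) (VR (lift ord0 i1)).
  move=> i1 q h1 h2; rewrite (@zm_greatest _ _ _ _ _ v i1 q h1 h2) /VR. case: eqP => e //.
  have hi : (i1 : nat).+1 = i by move: e; blia.
  rewrite Mx' //. congr (comp _ (zm_reg v _)); exact: ord_inj.
have Vm : forall (i1 : 'I_n) (j j1 : 'I_n), val j1 = (val j).+1 -> zm_s v j = i1 -> zm_s v j1 = i1 ->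
    comp (zm_sing v j) (zx' (X0 (erefl (dom q1)) (esym dq) cq1' cq2') j) =
    comp (zm_sing v j1) (zx (X0 (erefl (dom q1)) (esym dq) cq1' cq2') j1).
  move=> i1 j j1; exact: zm_middle.
have Ve : forall i1 : 'I_n, (forall j, zm_s v j <> i1) ->
    comp (zx A i1) (VR (widen_ord (leqnSn n) i1)) = comp (zx' A i1) (VR (lift ord0 i1)).
  move=> i1 H; by case: (H i1); rewrite es.
pose v' := @Build_zmap C n n _ A (zm_s v) VR (zm_sing v) (zm_mono v) Vd Vc
   (@zm_sing_dom _ _ _ _ _ v) (@zm_sing_cod _ _ _ _ _ v) Vl Vg Vm Ve.
have zc : zcomp_eq f v' (h0 (erefl (dom q1)) (esym dq) cq1' cq2' cm).
  split => /=.
  - by move=> j; rewrite es Hf.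
  - by move=> j; rewrite es Es.
  - move=> l'; rewrite /VR; case: eqP => e; last by rewrite Er.
    case: (hat_i Hf (ord_inj e)) => ->.
    + by rewrite e1 /h0r /= eqxx.
    + rewrite e2 /h0r /= ifF; last by apply/eqP; blia.
      by rewrite ifT //; apply/eqP; blia.
have := uq v' zc es.
move/(congr1 (fun z => zm_reg z i)) => /=. by rewrite /VR eqxx.
Qed.

End Fwd2.

Theorem lemma4p1 (C : Category) (n : nat) (i : 'I_n.+1)
    (A : zigzag C n) (B : zigzag C n.+1) (f : zmap A B)
    (Hf : zm_s f =1 lift i) :
  pi_cartesian f <->
  [/\ forall j : 'I_n, is_iso (zm_sing f j),
      forall j : 'I_n.+2, val j <> val i -> val j <> (val i).+1 ->
        is_iso (zm_reg f j) &
      is_pullback (zm_reg f (widen_ord (leqnSn n.+1) i)) (zm_reg f (lift ord0 i))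
                  (zx B i) (zx' B i)].
Proof.
split.
- move=> Hc. have [H1 H2] := isos Hf Hc. split => //. exact: pb.
- case=> H1 H2 H3. exact: back.
Qed.
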